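(* For any $d_y,M\in\mathbb{N}$ and any $\delta>0$, there exists a $\textsc{ReLU}$ network $f:\mathbb R\rightarrow\mathbb R^{d_y}$ of width $d_y$ such that $f(c)=\mathtt{decode}_M(c)$ for all $c\in\mathcal C_{d_yM}$. Furthermore, $f(\mathbb R)\subset[0,1]^{d_y}$.
   Context: For $n\in\mathbb N$, $\mathcal C_n:=\{0,2^{-n},2\cdot2^{-n},\dots,1-2^{-n}\}$ and $q_n:[0,1]\to\mathcal C_n$, $q_n(x)=\max\{c\in\mathcal C_n:c\le x\}$. For $y\in[0,1]^{d_y}$, $\mathtt{encode}_M(y):=\sum_{i=1}^{d_y}q_M(y_i)\,2^{-(i-1)M}\in\mathcal C_{d_yM}$. $\mathtt{decode}_M:\mathcal C_{d_yM}\to\mathcal C_M^{d_y}$ maps $c$ to the unique $\hat y\in\mathcal C_M^{d_y}$ with $\mathtt{encode}_M(\hat y)=c$ (i.e., $\sum_{i=1}^{d_y}\hat y_i 2^{-(i-1)M}=c$). A $\textsc{ReLU}$ network is $t_L\circ\sigma_{L-1}\circ\cdots\circ\sigma_1\circ t_1$ with affine $t_\ell:\mathbb R^{d_{\ell-1}}\to\mathbb R^{d_\ell}$ and coordinatewise $\textsc{ReLU}$ $\sigma_\ell$; its width is $\max\{d_1,\dots,d_{L-1}\}$. *)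

(* Defs.v *)
From mathcomp Require Import all_boot all_order all_algebra.
From mathcomp Require Import boolp classical_sets reals.
Set Implicit Arguments. Unset Strict Implicit. Unset Printing Implicit Defensive.
Import Order.TTheory GRing.Theory Num.Theory.
Local Open Scope ring_scope.
Local Open Scope classical_set_scope.

Definition Cn {R : realType} (n : nat) : set R :=
  [set x | exists k : nat, (k < 2 ^ n)%N /\ x = k%:R / 2 ^+ n].

Definition in_Cvec {R : realType} (dy M : nat) (y : 'rV[R]_dy) : Prop :=
  forall i : 'I_dy, Cn M (y 0 i).

(* sum_{i=1}^{d_y} y_i 2^{-(i-1)M}, indices shifted to 0-based *)
Definition encode_sum {R : realType} (dy M : nat) (y : 'rV[R]_dy) : R :=
  \sum_(i < dy) y 0 i / 2 ^+ (i * M).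

Definition decode {R : realType} (dy M : nat) (c : R) : 'rV[R]_dy :=
  xget 0 [set y | in_Cvec M y /\ encode_sum M y = c].

Definition relu_vec {R : realType} (n : nat) (x : 'rV[R]_n) : 'rV[R]_n :=
  map_mx (fun v => Num.max v 0) x.

(* relu_net din dout hs f : f is the ReLU network t_L o s_{L-1} o ... o s_1 o t_1
   whose hidden layer dimensions are hs = [d_1; ...; d_{L-1}]. *)
Inductive relu_net (R : realType) (din : nat) :
    forall (dout : nat), seq nat -> ('rV[R]_din -> 'rV[R]_dout) -> Prop :=
  | relu_net_affine (dout : nat) (A : 'M[R]_(din, dout)) (b : 'rV[R]_dout) :
      @relu_net R din dout [::] (fun x => x *m A + b)
  | relu_net_layer (k dout : nat) (hs : seq nat) (g : 'rV[R]_din -> 'rV[R]_k)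
      (A : 'M[R]_(k, dout)) (b : 'rV[R]_dout) :
      @relu_net R din k hs g ->
      @relu_net R din dout (rcons hs k) (fun x => relu_vec (g x) *m A + b).

Definition width (hs : seq nat) : nat := \max_(h <- hs) h.

Arguments relu_net {R} din dout hs f.

(* Main.v *)
Require Import Defs.
From mathcomp Require Import all_boot all_order all_algebra.
From mathcomp Require Import boolp classical_sets reals.
From mathcomp Require Import ring lra zify.
Set Implicit Arguments. Unset Strict Implicit. Unset Printing Implicit Defensive.
Import Order.TTheory GRing.Theory Num.Theory.

Lemma modn_split (m P Q : nat) : 0 < P -> 0 < Q ->
  m %% (P * Q) = m %% P + P * (m %/ P %% Q).
Proof.
move=> P0 Q0.
have {1}-> : m = (m %/ P %/ Q) * (P * Q) + (P * (m %/ P %% Q) + m %% P).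
  by rewrite [in LHS](divn_eq m P) [in LHS](divn_eq (m %/ P) Q); nia.
rewrite modnMDl modn_small; first lia.
have := ltn_pmod (m %/ P) Q0; have := ltn_pmod m P0; nia.
Qed.

Definition Xs (N e : nat) (b : nat -> nat) := \sum_(i < e) b i * N ^ (e - i.+1).

Lemma XsS N e b : Xs N e.+1 b = N * Xs N e b + b e.
Proof.
rewrite /Xs big_ord_recr /= subnn expn0 muln1 big_distrr /=; congr (_ + _).
apply: eq_bigr => i _; rewrite subSS.
have hi := ltn_ord i.
rewrite -(subnSK hi) expnS; lia.
Qed.

Lemma Xs_digits N e b : 0 < N -> (forall i, i < e -> b i < N) ->
  forall i, i < e -> Xs N e b %/ N ^ (e - i.+1) %% N = b i.
Proof.
move=> N0; elim: e => [//|e IH] hb i hi.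
rewrite XsS.
case: (ltngtP i e) => [lt|gt|->].
- rewrite subSS -(subnSK lt) expnS divnMA.
  rewrite mulnC divnMDl // (divn_small (hb e (ltnSn e))) addn0.
  by apply: IH => // k hk; apply: hb; lia.
- lia.
- rewrite subnn expn0 divn1 mulnC modnMDl modn_small //; exact: hb.
Qed.

Lemma digits_Xs N e m : 0 < N ->
  m %% N ^ e = Xs N e (fun i => m %/ N ^ (e - i.+1) %% N).
Proof.
move=> N0; elim: e m => [|e IH] m; first by rewrite expn0 modn1 /Xs big_ord0.
rewrite XsS subnn expn0 divn1.
have -> : Xs N e (fun i => m %/ N ^ (e.+1 - i.+1) %% N) =
          Xs N e (fun i => (m %/ N) %/ N ^ (e - i.+1) %% N).
  apply: eq_bigr => i _; rewrite subSS.
  have hi := ltn_ord i.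
  by rewrite -(subnSK hi) expnS divnMA.
rewrite -IH expnS modn_split ?expn_gt0 ?N0 //; lia.
Qed.

Local Open Scope ring_scope.

Lemma pair_real (R : realType) (kN w q s K : R) : 0 < w -> 0 <= s -> 1 <= K ->
  K * s <= (K - 1) * w -> (kN + w <= q \/ q <= kN) ->
  Num.max (K * (kN + w) - Num.max (K * (kN + w) - w - Num.max (kN - q) 0 - K * (q + s)) 0
     - K * (q + s)) 0 = Num.max (kN + w - q) 0.
Proof.
move=> w0 s0 K1 Ks [h|h].
- have h1 : K * (kN + w) <= K * q by rewrite ler_wpM2l //; lra.
  have h2 : 0 <= K * s by apply: mulr_ge0 => //; lra.
  have -> : Num.max (kN - q) 0 = 0 by apply: max_r; lra.
  have -> : Num.max (K * (kN + w) - w - 0 - K * (q + s)) 0 = 0 by apply: max_r; lra.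
  have -> : Num.max (kN + w - q) 0 = 0 by apply: max_r; lra.
  by apply: max_r; lra.
- have h1 : 0 <= (K - 1) * (kN - q) by apply: mulr_ge0; lra.
  have -> : Num.max (kN - q) 0 = kN - q by apply: max_l; lra.
  have -> : Num.max (K * (kN + w) - w - (kN - q) - K * (q + s)) 0 =
     K * (kN + w) - w - (kN - q) - K * (q + s) by apply: max_l; lra.
  have -> : Num.max (kN + w - q) 0 = kN + w - q by apply: max_l; lra.
  by rewrite max_l; lra.
Qed.


Section Net.
Variable R : realType.
Variable n : nat.

Record Lay := mkLay { la : nat -> R; lp : nat -> nat; lb : nat -> R; lq : nat -> nat; lB : nat -> R }.

Definition mat (L : Lay) : 'M[R]_(n.+1) :=
  \matrix_(k, i) (la L i * ((k : nat) == lp L i)%:R + lb L i * ((k : nat) == lq L i)%:R).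
Definition bias (L : Lay) : 'rV[R]_(n.+1) := \row_i lB L i.
Definition vat (v : 'rV[R]_(n.+1)) (p : nat) : R := \sum_(k < n.+1) ((k : nat) == p)%:R * v 0 k.
Definition app (L : Lay) (v : 'rV[R]_(n.+1)) := relu_vec (v *m mat L + bias L).
Definition run (ls : seq Lay) v := foldl (fun v L => app L v) v ls.

Lemma pre_at L v (i : 'I_n.+1) :
  (v *m mat L + bias L) 0 i = la L i * vat v (lp L i) + lb L i * vat v (lq L i) + lB L i.
Proof.
rewrite !mxE /vat; congr (_ + _); rewrite !mulr_sumr -big_split /=.
apply: eq_bigr => k _; rewrite mxE; ring.
Qed.

Lemma vat_ord v (i : 'I_n.+1) : vat v i = v 0 i.
Proof.
rewrite /vat (bigD1 i) //= eqxx mul1r big1 ?addr0 // => k hk.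
by rewrite (_ : (k : nat) == i = false) ?mul0r //; apply/negbTE.
Qed.

Lemma vat_inord v p : (p <= n)%N -> vat v p = v 0 (inord p).
Proof. by move=> hp; rewrite -vat_ord inordK. Qed.

Lemma vat_big v p : (n < p)%N -> vat v p = 0.
Proof.
move=> hp; rewrite /vat big1 // => k _.
have : (k : nat) != p by apply/eqP => e; have := ltn_ord k; lia.
by move/negbTE => ->; rewrite mul0r.
Qed.

Lemma vat_app L v p : (p <= n)%N ->
  vat (app L v) p = Num.max (la L p * vat v (lp L p) + lb L p * vat v (lq L p) + lB L p) 0.
Proof.
move=> hp; rewrite vat_inord // /app /relu_vec mxE pre_at inordK //.
Qed.

Lemma NN_relu (w : 'rV[R]_(n.+1)) p : 0 <= vat (relu_vec w) p.
Proof.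
rewrite /vat; apply: sumr_ge0 => k _; apply: mulr_ge0; first by rewrite ler0n.
by rewrite mxE le_max lexx orbT.
Qed.

Lemma run_cat l1 l2 v : run (l1 ++ l2) v = run l2 (run l1 v).
Proof. by rewrite /run foldl_cat. Qed.

Lemma net_run (ls : seq Lay) : forall hs (g : 'rV[R]_1 -> 'rV[R]_(n.+1)), relu_net 1 n.+1 hs g ->
  forall Lf, relu_net 1 n.+1 (rcons (hs ++ nseq (size ls) n.+1) n.+1)
     (fun x => run ls (relu_vec (g x)) *m mat Lf + bias Lf).
Proof.
elim: ls => [|L ls IH] hs g hg Lf.
  by rewrite cats0; apply: relu_net_layer.
have := IH _ _ (relu_net_layer (mat L) (bias L) hg) Lf.
by rewrite cat_rcons.
Qed.


Definition NN v := forall p, 0 <= vat v p.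

Definition sop (j : nat) (beta K : R) :=
  mkLay (fun i => if i == j.+1 then -1 else 1) id
        (fun i => if i == j.+1 then -K else 0) (fun _ => j)
        (fun i => if i == j.+1 then beta else 0).
Definition endl (j : nat) (NR : R) :=
  mkLay (fun i => if i == j then -1 else if i == j.+1 then NR else 1)
        (fun i => if i == j then j.+1 else i)
        (fun i => if i == j.+1 then NR else 0) (fun _ => j)
        (fun i => if i == j then (NR - 1) / NR else if i == j.+1 then - (NR - 1) else 0).
Definition clampL := mkLay (fun _ => -1) id (fun _ => 0) id (fun _ => 1).

Lemma NN_app L v : NN (app L v).
Proof. move=> p; exact: NN_relu. Qed.

Lemma NN_run ls v : NN v -> NN (run ls v).
Proof. by elim: ls v => [//|L ls IH] v hv; apply: IH; apply: NN_app. Qed.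

Lemma sop_other j beta K v p : NN v -> p != j.+1 ->
  vat (app (sop j beta K) v) p = vat v p.
Proof.
move=> hv hp; case: (leqP p n) => hpn; last by rewrite !vat_big.
rewrite vat_app //= (negbTE hp) mul1r mul0r !addr0; apply: max_l; exact: hv.
Qed.

Lemma sop_s j beta K v : (j.+1 <= n)%N ->
  vat (app (sop j beta K) v) j.+1 = Num.max (beta - vat v j.+1 - K * vat v j) 0.
Proof. by move=> h; rewrite vat_app //= eqxx; congr (Num.max _ _); ring. Qed.

Lemma endl_other j NR v p : NN v -> p != j -> p != j.+1 ->
  vat (app (endl j NR) v) p = vat v p.
Proof.
move=> hv hp hp'; case: (leqP p n) => hpn; last by rewrite !vat_big.
rewrite vat_app //= (negbTE hp) (negbTE hp') mul1r mul0r !addr0; apply: max_l; exact: hv.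
Qed.

Lemma endl_j j NR v : (j.+1 <= n)%N ->
  vat (app (endl j NR) v) j = Num.max ((NR - 1) / NR - vat v j.+1) 0.
Proof.
move=> h; rewrite vat_app /=; last lia.
by rewrite eqxx (_ : (j == j.+1) = false) ?mul0r; [congr (Num.max _ _); ring | lia].
Qed.

Lemma endl_s j NR v : (j.+1 <= n)%N ->
  vat (app (endl j NR) v) j.+1 = Num.max (NR * vat v j.+1 + NR * vat v j - (NR - 1)) 0.
Proof.
move=> h; rewrite vat_app //= eqxx (_ : (j.+1 == j) = false); last lia.
by congr (Num.max _ _); ring.
Qed.

Lemma clamp_sem v p : (p <= n)%N -> vat (app clampL v) p = Num.max (1 - vat v p) 0.
Proof. by move=> h; rewrite vat_app //=; congr (Num.max _ _); ring. Qed.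

Lemma clamp_out v (i : 'I_n.+1) : (v *m mat clampL + bias clampL) 0 i = 1 - v 0 i.
Proof. by rewrite pre_at /= vat_ord; ring. Qed.

Definition pairL j (t : nat) K NR :=
  [:: sop j (K * (t%:R / NR + NR^-1) - NR^-1) K; sop j (K * (t%:R / NR + NR^-1)) K].
Definition pairs j T K NR := flatten [seq pairL j t K NR | t <- iota 0 T].

Lemma pairs_sem j K (N a : nat) q s v : (j.+1 <= n)%N -> (0 < N)%N -> NN v ->
  vat v j.+1 = 0 -> vat v j = q + s -> q = a%:R / N%:R -> 0 <= s -> 1 <= K ->
  K * s <= (K - 1) * N%:R^-1 ->
  forall T, let u := run (pairs j T K N%:R) v in
    [/\ NN u, vat u j.+1 = Num.max (T%:R / N%:R - q) 0 &
        forall p, p != j.+1 -> vat u p = vat v p].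
Proof.
move=> hj N0 hv h0 hr hq s0 K1 Ks; elim=> [|T [IH1 IH2 IH3]].
  split=> //; rewrite /= h0 mul0r sub0r; apply/esym/max_r.
  by rewrite hq oppr_le0 divr_ge0 ?ler0n.
rewrite /pairs -addn1 iotaD map_cat flatten_cat run_cat /= add0n.
set u := run _ v.
have NR0 : (0 : R) < N%:R by rewrite ltr0n.
split.
- exact: NN_app.
- rewrite sop_s // sop_s // sop_other //; last by apply/eqP; lia.
  rewrite IH2 (IH3 j) ?hr; last by apply/eqP; lia.
  have -> : ((T + 1)%N%:R / N%:R : R) = T%:R / N%:R + N%:R^-1 by rewrite natrD mulrDl mul1r.
  apply: pair_real => //; first by rewrite invr_gt0.
  case: (ltnP T a) => hTa; [left|right]; rewrite hq.
  + have -> : (T%:R / N%:R + N%:R^-1 : R) = T.+1%:R / N%:R by rewrite -natr1 mulrDl mul1r.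
    by apply: ler_wpM2r; [rewrite invr_ge0 ler0n | rewrite ler_nat; lia].
  + by apply: ler_wpM2r; [rewrite invr_ge0 ler0n | rewrite ler_nat].
- move=> p hp; rewrite sop_other ?sop_other //; last exact: NN_app.
  exact: IH3.
Qed.

End Net.

Section Stage.
Variable R : realType.
Variable n : nat.

Definition stage j (K : R) (N : nat) : seq (Lay R) :=
  pairs j N.-1 K N%:R ++ [:: endl j N%:R].

Lemma stage_sem j K (N a : nat) q s (v : 'rV[R]_n.+1) : (j.+1 <= n)%N -> (0 < N)%N -> NN v ->
  vat v j.+1 = 0 -> vat v j = q + s -> q = a%:R / N%:R -> (a < N)%N -> 0 <= s -> 1 <= K ->
  K * s <= (K - 1) * N%:R^-1 ->
  let u := run (stage j K N) v in
    [/\ NN u, vat u j = q, vat u j.+1 = N%:R * s &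
        forall p, p != j -> p != j.+1 -> vat u p = vat v p].
Proof.
move=> hj N0 hv h0 hr hq ha s0 K1 Ks /=.
rewrite /stage run_cat /=.
have [h1 h2 h3] := pairs_sem hj N0 hv h0 hr hq s0 K1 Ks N.-1.
set w := run _ v in h1 h2 h3 *.
have NR0 : (0 : R) < N%:R by rewrite ltr0n.
have eN : (N%:R : R) = (N.-1)%:R + 1 by rewrite natr1 prednK.
have hqa : q <= (N.-1)%:R / N%:R.
  rewrite hq; apply: ler_wpM2r; first by rewrite invr_ge0 ler0n.
  by rewrite ler_nat; lia.
have q0 : 0 <= q by rewrite hq divr_ge0 ?ler0n.
have hp : vat w j.+1 = (N.-1)%:R / N%:R - q.
  by rewrite h2; apply: max_l; lra.
have ediv : (N%:R - 1) / N%:R = (N.-1)%:R / N%:R :> R by rewrite eN addrK.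
split.
- exact: NN_app.
- rewrite endl_j // hp ediv; apply/eqP; rewrite eq_le; apply/andP; split.
  + by rewrite ge_max; apply/andP; split; lra.
  + by rewrite le_max; apply/orP; left; lra.
- rewrite endl_s // hp (h3 j) ?hr; last by apply/eqP; lia.
  have -> : N%:R * ((N.-1)%:R / N%:R - q) + N%:R * (q + s) - (N%:R - 1) = N%:R * s.
    have e2 : N%:R * ((N.-1)%:R / N%:R) = (N.-1)%:R :> R by rewrite mulrC divfK // lt0r_neq0.
    rewrite mulrBr e2.
    rewrite eN; ring.
  by apply: max_l; apply: mulr_ge0; lra.
- move=> p hp1 hp2; rewrite endl_other //; exact: h3.
Qed.

End Stage.

Section Main.
Variable R : realType.
Variables (n N n0 : nat).
Hypothesis N0 : (0 < N)%N.

Definition yd i : R := ((n0 %/ N ^ (n - i)) %% N)%:R / N%:R.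
Definition rr j : R := (n0 %% N ^ (n.+1 - j))%:R / (N ^ (n.+1 - j))%:R.
Definition Kj j : R := (N ^ (n - j))%:R.
Definition stages J := flatten [seq stage j (Kj j) N | j <- iota 0 J].
Definition Inv J (v : 'rV[R]_n.+1) := [/\ NN v, forall i, (i < J)%N -> vat v i = yd i,
   vat v J = rr J & forall i, (J < i)%N -> vat v i = 0].

Lemma Inv_step J v : (J < n)%N -> Inv J v -> Inv J.+1 (run (stage J (Kj J) N) v).
Proof.
move=> hJ [hv hlt hJv hgt].
set P := (N ^ (n - J))%N.
have P0 : (0 < P)%N by rewrite expn_gt0 N0.
set a := (n0 %/ P %% N)%N.
set x := (n0 %% P)%N.
have NR0 : (0 : R) < N%:R by rewrite ltr0n.
have PR0 : (0 : R) < P%:R by rewrite ltr0n.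
have ePN : (N ^ (n.+1 - J) = P * N)%N by rewrite subSn ?expnSr //; lia.
have hr : vat v J = a%:R / N%:R + x%:R / (P * N)%:R.
  rewrite hJv /rr ePN modn_split // natrD natrM [(P * _)%N]mulnC natrM.
  field; apply/andP; split; apply: lt0r_neq0 => //.
have hx : (x < P)%N by rewrite ltn_pmod.
have hj1 : (J.+1 <= n)%N by lia.
have h0 : vat v J.+1 = 0 by apply: hgt.
have ha : (a < N)%N by rewrite ltn_pmod.
have s0 : (0 : R) <= x%:R / (P * N)%:R by rewrite divr_ge0 ?ler0n.
have K1 : (1 : R) <= Kj J by rewrite /Kj ler1n.
have Ks : Kj J * (x%:R / (P * N)%:R) <= (Kj J - 1) * N%:R^-1.
  have -> : Kj J * (x%:R / (P * N)%:R) = x%:R * N%:R^-1.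
    by rewrite /Kj -/P natrM; field; apply/andP; split; apply: lt0r_neq0.
  apply: ler_wpM2r; first by rewrite invr_ge0 ler0n.
  have : (x + 1 <= P)%N by lia.
  rewrite /Kj -/P -(ler_nat R) natrD; lra.
have [] := stage_sem hj1 N0 hv h0 hr erefl ha s0 K1 Ks.
move=> h1 h2 h3 h4; split => //.
- move=> i hi; case: (ltngtP i J) => [lt|gt|->]; [|lia|].
  + rewrite h4 ?hlt //; apply/eqP; lia.
  + by rewrite h2.
- rewrite h3 /rr subSS -/P -/x natrM; field.
  by apply/andP; split; apply: lt0r_neq0.
- move=> i hi; rewrite h4 ?hgt //; apply/eqP; lia.
Qed.


Lemma Inv_all v J : (J <= n)%N -> Inv 0 v -> Inv J (run (stages J) v).
Proof.
move=> + h0; elim: J => [//|J IH] hJ.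
rewrite /stages.
have -> : iota 0 J.+1 = iota 0 J ++ [:: J] by rewrite -addn1 iotaD.
rewrite map_cat flatten_cat run_cat /= cats0.
by apply: Inv_step; [lia | apply: IH; lia].
Qed.

Lemma Inv_final v : Inv n v -> forall i, (i <= n)%N -> vat v i = yd i.
Proof.
move=> [_ hlt hn _] i hi; case: (ltnP i n) => [lt|ge]; first exact: hlt.
have -> : i = n by lia.
by rewrite hn /rr /yd subSn // subnn !expn1 expn0 divn1.
Qed.

Lemma yd_bounds i : 0 <= yd i <= 1.
Proof.
have NR0 : (0 : R) < N%:R by rewrite ltr0n.
rewrite /yd divr_ge0 ?ler0n //= ler_pdivrMr // mul1r ler_nat.
by apply: ltnW; rewrite ltn_pmod.
Qed.

End Main.

Lemma enc_Xs (R : realType) (n N : nat) (f : nat -> nat) : (0 < N)%N ->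
  \sum_(i < n.+1) ((f i)%:R / N%:R) / (N%:R ^+ i) = (Xs N n.+1 f)%:R / (N ^ n.+1)%:R :> R.
Proof.
move=> N0.
have NR0 : (N%:R : R) != 0 by rewrite pnatr_eq0 -lt0n.
rewrite /Xs natr_sum mulr_suml; apply: eq_bigr => i _.
have hi : (i <= n)%N by have := ltn_ord i; lia.
rewrite subSS.
have -> : (N ^ n.+1 = N ^ (n - i) * N ^ i * N)%N by rewrite -expnD subnK // expnSr.
rewrite !natrM !natrX; field.
  by rewrite NR0 !expf_neq0.
Qed.

Unset Implicit Arguments.
Local Open Scope classical_set_scope.

Lemma width_nseq k d : width (rcons (nseq k d) d) = d.
Proof.
rewrite /width -cats1 big_cat /= big_cons big_nil maxn0.
elim: k => [|k IH]; first by rewrite big_nil max0n.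
by rewrite /= big_cons -maxnA IH maxnn.
Qed.

Theorem lemma6 (R : realType) (dy M : nat) (delta : R) :
  (0 < dy)%N -> (0 < M)%N -> 0 < delta ->
  exists (hs : seq nat) (f : 'rV[R]_1 -> 'rV[R]_dy),
    [/\ relu_net 1 dy hs f,
        width hs = dy,
        (forall c : R, Cn (dy * M) c -> f (\row_(_ < 1) c) = decode dy M c) &
        (forall (x : R) (i : 'I_dy),
            0 <= f (\row_(_ < 1) x) 0 i /\ f (\row_(_ < 1) x) 0 i <= 1)].
Proof.
move=> hdy hM _; case: dy hdy => [//|n] _.
set N := (2 ^ M)%N.
have N0 : (0 < N)%N by rewrite expn_gt0.
have NR0 : (0 : R) < N%:R by rewrite ltr0n.
have eNR : (N%:R : R) = 2 ^+ M by rewrite natrX.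
pose A0 : 'M[R]_(1, n.+1) := \matrix_(k, i) ((i : nat) == 0%N)%:R.
pose F0 := fun x : 'rV[R]_1 => x *m A0 + 0.
pose ls := rcons (stages R n N n) (clampL R).
pose f := fun x => run ls (relu_vec (F0 x)) *m mat n (clampL R) + bias n (clampL R).
have fE : forall x (i : 'I_n.+1),
    f x 0 i = 1 - Num.max (1 - vat (run (stages R n N n) (relu_vec (F0 x))) i) 0.
  move=> x i; rewrite /f clamp_out /ls -cats1 run_cat /= -vat_ord clamp_sem //.
  by have := ltn_ord i; lia.
exists (rcons ([::] ++ nseq (size ls) n.+1) n.+1), f.
split.
- apply: net_run; exact: relu_net_affine.
- by rewrite cat0s width_nseq.
- move=> c0_ [k [hk ->]].
  have eD : (2 ^ (n.+1 * M) = N ^ n.+1)%N by rewrite mulnC expnM.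
  have eDR : (2 : R) ^+ (n.+1 * M) = (N ^ n.+1)%:R by rewrite natrX eNR -exprM mulnC.
  have hk' : (k < N ^ n.+1)%N by rewrite -eD.
  set c := k%:R / 2 ^+ (n.+1 * M).
  have c0 : 0 <= c by rewrite /c eDR divr_ge0 ?ler0n.
  pose v0 := relu_vec (F0 (\row_(_ < 1) c)).
  have hv0 : forall i, (i <= n)%N -> vat v0 i = Num.max (c * (i == 0%N)%:R) 0.
    move=> i hi; rewrite vat_inord // /v0 /relu_vec /F0 !mxE big_ord1 !mxE inordK //.
    by rewrite addr0.
  have hI0 : Inv N k 0 v0.
    split => //.
    - exact: NN_relu.
    - rewrite hv0 // eqxx mulr1 max_l // /rr subn0 modn_small // /c eDR //.
    - move=> i hi; case: (leqP i n) => hin; last by rewrite vat_big.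
      rewrite hv0 // (_ : (i == 0%N) = false) ?mulr0 ?maxxx //; lia.
  have hI := Inv_all N0 (leqnn n) hI0.
  pose Y := \row_(i < n.+1) yd R n N k i.
  have -> : f (\row_(_ < 1) c) = Y.
    apply/rowP => i; rewrite fE mxE (Inv_final N0 hI); last by have := ltn_ord i; lia.
    have /andP [y0 y1] := @yd_bounds R n N k N0 i.
    rewrite max_l; [ring | lra].
  have e2 : forall i : nat, (2 : R) ^+ (i * M) = N%:R ^+ i by move=> i; rewrite eNR -exprM mulnC.
  apply/esym/xget_unique.
  + split.
    * move=> i; exists (k %/ N ^ (n - i) %% N)%N; split; first by rewrite ltn_pmod.
      by rewrite mxE /yd eNR.
    * rewrite /encode_sum.
      under eq_bigr => i _ do rewrite mxE /yd e2.
      rewrite (enc_Xs R n (fun i => k %/ N ^ (n - i) %% N)%N N0).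
      have := digits_Xs n.+1 k N0; rewrite modn_small // => <-.
      by rewrite /c eDR.
  + move=> y [hy hy2].
    have : forall i, exists u, (u < 2 ^ M)%N /\ y 0 i = u%:R / 2 ^+ M by move=> i; exact: hy i.
    move=> /choice [g hg].
    pose b := fun j : nat => g (inord j).
    have hb : forall i : 'I_n.+1, b i = g i by move=> i; rewrite /b inord_val.
    move: hy2; rewrite /encode_sum.
    under eq_bigr => i _ do rewrite (hg i).2 -eNR e2 -hb.
    rewrite (enc_Xs R n b N0) /c eDR.
    move/(congr1 (fun t => t * (N ^ n.+1)%:R)); rewrite !divfK; last first.
      by rewrite pnatr_eq0 -lt0n expn_gt0 N0.
      by rewrite pnatr_eq0 -lt0n expn_gt0 N0.
    move/eqP; rewrite eqr_nat => /eqP hX.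
    have hd := Xs_digits N0 (b := b) (e := n.+1).
    apply/rowP => i; rewrite !mxE (hg i).2 /yd -eNR -hb.
    rewrite -hX hd // => j hj; exact: (hg (inord j)).1.
- move=> x i; rewrite fE.
  have := NN_run (stages R n N n) (NN_relu (F0 (\row__ x))) i.
  set u := vat _ _ => hu.
  split.
  + rewrite subr_ge0 ge_max; apply/andP; split; lra.
  + rewrite lerBlDr -lerBlDl subrr le_max lexx orbT //.
Qed.
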